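(* Let $m\ge 1$ and let $a_0,a_1,\dots,a_m$ be nonnegative integers, not all zero, and let $C_0>0$. Consider the problem of maximizing the score $S=\sum_{i=0}^{m} a_i m_i$ over real numbers $m_0,\dots,m_m\ge 0$ subject to the cost constraint $\frac12\sum_{i=0}^{m} a_i\, 2^i\, m_i^2\le C_0$. Then this problem has an optimal solution of the form $m_i=c\,2^{-i}$ for all $i=0,\dots,m$, for some constant $c>0$. That is, the proportional multiplicity assignment is optimal for every received word.
   Context: Setting: a Reed–Solomon code of length $N$ and dimension $K$ over $GF(2^m)$ whose symbols are sent as $m$ bits each over a binary erasure channel. A received symbol in which exactly $i$ bits are erased is said to be of type $i$; it is consistent with $2^i$ candidate symbols. In algebraic soft decoding (ASD), each of the $2^i$ candidates of a type-$i$ symbol receives the same real multiplicity $m_i\ge 0$. If the received word has $a_i$ symbols of type $i$, the score is $S=\sum_i a_i m_i$ and the (large-multiplicity approximation of the) cost is $C=\frac12\sum_i a_i 2^i m_i^2$. *)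

(* Defs.v *)
From mathcomp Require Import all_boot all_order all_algebra.
From mathcomp Require Import reals.
Set Implicit Arguments. Unset Strict Implicit. Unset Printing Implicit Defensive.
Import Order.TTheory GRing.Theory Num.Theory.
Local Open Scope ring_scope.

Definition score (R : realType) (m : nat) (a : 'I_m.+1 -> nat) (mu : 'I_m.+1 -> R) : R :=
  \sum_(i < m.+1) (a i)%:R * mu i.

Definition cost (R : realType) (m : nat) (a : 'I_m.+1 -> nat) (mu : 'I_m.+1 -> R) : R :=
  2^-1 * \sum_(i < m.+1) (a i)%:R * 2 ^+ i * mu i ^+ 2.

Definition feasible (R : realType) (m : nat) (a : 'I_m.+1 -> nat) (C0 : R)
  (mu : 'I_m.+1 -> R) : Prop :=
  (forall i, 0 <= mu i) /\ cost a mu <= C0.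

(* Main.v *)
Require Import Defs.
From mathcomp Require Import all_boot all_order all_algebra.
From mathcomp Require Import reals.
From mathcomp Require Import ring lra.
Import Order.TTheory GRing.Theory Num.Theory.
Local Open Scope ring_scope.

Theorem lemma2 (R : realType) (m : nat) (a : 'I_m.+1 -> nat) (C0 : R) :
  (1 <= m)%N -> (exists i, a i <> 0%N) -> 0 < C0 ->
  exists c : R, 0 < c /\
    let mu := fun i : 'I_m.+1 => c / 2 ^+ i in
    feasible a C0 mu /\
    (forall nu : 'I_m.+1 -> R, feasible a C0 nu -> score a nu <= score a mu).
Proof.
move=> _ [j aj] C0p.
have pp : forall i : 'I_m.+1, 0 < (2:R) ^+ i by move=> i; apply: exprn_gt0.
set W := \sum_(i < m.+1) (a i)%:R / (2:R) ^+ i.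
have Wp : 0 < W.
  rewrite /W (bigD1 j) //=; apply: ltr_pwDl.
    apply: divr_gt0; last exact: pp.
    by rewrite ltr0n lt0n; apply/eqP.
  apply: sumr_ge0 => i _; apply: divr_ge0; [exact: ler0n | exact: ltW].
set c := Num.sqrt (2 * C0 / W).
have cp : 0 < c by rewrite sqrtr_gt0; apply: divr_gt0 => //; lra.
have c2 : c ^+ 2 = 2 * C0 / W by rewrite sqr_sqrtr //; apply: divr_ge0; lra.
have C0e : C0 = c ^+ 2 * W / 2.
  rewrite c2; field; by rewrite gt_eqF.
exists c; split => //= .
have smu : score a (fun i : 'I_m.+1 => c / 2 ^+ i) = c * W.
  rewrite /score /W mulr_sumr; apply: eq_bigr => i _; field.
  by rewrite gt_eqF.
split.
  split; first by move=> i; apply: divr_ge0; [exact: ltW | exact: ltW].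
  rewrite /cost C0e le_eqVlt; apply/orP; left; apply/eqP.
  have -> : c ^+ 2 * W / 2 = 2^-1 * \sum_(i < m.+1) c ^+ 2 * ((a i)%:R / (2:R) ^+ i).
    by rewrite -mulr_sumr /W mulrC.
  congr (_ * _); apply: eq_bigr => i _.
  field; by rewrite gt_eqF.
move=> nu [_ cn].
rewrite smu.
have key : score a nu <= cost a nu / c + c * W / 2.
  rewrite /score /cost /W.
  have -> : 2^-1 * (\sum_(i < m.+1) (a i)%:R * 2 ^+ i * nu i ^+ 2) / c
           + c * (\sum_(i < m.+1) (a i)%:R / 2 ^+ i) / 2
         = \sum_(i < m.+1) ((a i)%:R * 2 ^+ i * nu i ^+ 2 / (2 * c)
                            + c * (a i)%:R / (2 * 2 ^+ i)).
    rewrite big_split /=; congr (_ + _); rewrite mulr_sumr mulr_suml;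
      apply: eq_bigr => i _.
      field; by rewrite gt_eqF.
    field; by rewrite !gt_eqF.
  apply: ler_sum => i _.
  have pi := pp i.
  set p := (2:R) ^+ i in pi *.
  set A := (a i)%:R.
  have A0 : 0 <= A by exact: ler0n.
  rewrite -subr_ge0.
  have -> : A * p * nu i ^+ 2 / (2 * c) + c * A / (2 * p) - A * nu i
          = A * (p * nu i - c) ^+ 2 / (2 * c * p).
    field; by rewrite !gt_eqF.
  apply: divr_ge0; first by apply: mulr_ge0 => //; exact: sqr_ge0.
  apply: ltW; apply: mulr_gt0 => //; lra.
apply: (le_trans key).
have : cost a nu / c <= C0 / c by rewrite ler_pM2r // invr_gt0.
rewrite C0e.
have -> : c ^+ 2 * W / 2 / c = c * W / 2 by field; rewrite gt_eqF.
lra.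
Qed.
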